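(* Let $B=(V,E,>)$ be a non-elementary $k$-simple ordered Bratteli diagram with $k\ge2$, and let $L_n$ denote its transition graph at level $n$. If $L_n$ has an edge $v_1$ whose source is the vertex $Y_i$, then there is a closed walk $(v_1,\dots,v_l)$ in $L_n$ starting with $v_1$, i.e., a directed walk whose last edge $v_l$ has range $Y_i$.
   Context: Bratteli diagram: vertex sets $V^0=\{v_0\},V^1,\dots$, edge sets $E^n$ with $s(E^n)=V^n$, $r(E^n)=V^{n+1}$; $w$ at level $m$ is connected to $v$ at level $n<m$ if a finite path goes from $v$ to $w$. $k$-simple: for each $n\ge1$ pairwise disjoint $V^n_1,\dots,V^n_k\subseteq V^n$ with (i) $s(r^{-1}(v))\subseteq V^n_i$ for $v\in V^{n+1}_i$; (ii) for all $i,n$ some $m>n$ with every vertex of $V^m_i$ connected to every vertex of $V^n_i$. $V^n_o:=V^n\setminus\bigcup_iV^n_i$. Non-elementary: for every $n$ there is $m>n$ with the number of paths between any vertex of $V^n_o$ and any vertex of $V^m_o$ equal to $0$ or $\ge2$. An order is a linear order on each $r^{-1}(v)$, extended lexicographically to finite paths with common range; $e+1$ is the successor; $E_{\max},E_{\min}$, $X_{\max},X_{\min}$ are maximal/minimal edges and infinite paths. $k$-simple ordered: (1) $(V,E)$ $k$-simple; (2) infinite paths $z_{i,\max},z_{i,\min}$ with level-$n$ vertices in $V^n_i$, and $X_{\max}=\{z_{i,\max}\}_{i}$, $X_{\min}=\{z_{i,\min}\}_i$; there is $L$ such that for $n\ge L$, $v\in V^n_o$, the maximal (resp. minimal) path from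 $v_0$ to $v$ passes at level $1$ through $V^1_i$, written $m_+(v)=i$ (resp. $m_-(v)=i$); (3) for $v\in V^n_o$: (a) every edge $e$ with $s(e)=v$ satisfies $m_-(s(e+1))=m_+(v)$ (for maximal $e$, $s(e+1)$ means the level-$n$ source of the successor of a non-maximal finite path beginning with $e$); (b) if $e\notin E_{\max}$, $r(e)=v$, $s(e)\in V^{n-1}_i$, $n\ge3$, then $m_-(s(e+1))=i$. The transition graph $L_n$ (for $n\ge\max(2,L)$) is the directed multigraph with vertices $Y_1,\dots,Y_k$ and, for each $v\in V^n_o$, one edge labelled $v$ from $Y_{m_-(v)}$ to $Y_{m_+(v)}$. *)

(* Defs.v *)
From Stdlib Require List.
From mathcomp Require Import all_boot.
Set Implicit Arguments. Unset Strict Implicit. Unset Printing Implicit Defensive.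

(* An ordered Bratteli diagram, presented with all levels in one type:
   vertices V with a level function, edges E with source/range, and a
   rank function encoding the linear order on each r^{-1}(v). *)
Record obd := OBD {
  V : Type; E : Type;
  lvl : V -> nat;
  src : E -> V;
  rng : E -> V;
  rank : E -> nat }.

Section Defs.
Variable B : obd.
Local Notation V := (V B). Local Notation E := (E B).
Local Notation lvl := (@lvl B). Local Notation src := (@src B).
Local Notation rng := (@rng B). Local Notation rank := (@rank B).

Definition is_obd : Prop :=
  (forall e, lvl (rng e) = (lvl (src e)).+1) /\
  (exists v0, forall v, lvl v = 0 <-> v = v0) /\
  (forall n, exists v, lvl v = n) /\
  (forall n, exists s : seq V, forall v, lvl v = n -> List.In v s) /\
  (forall n, exists s : seq E, forall e, lvl (src e) = n -> List.In e s) /\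
  (forall v, 1 <= lvl v -> exists e, rng e = v) /\
  (forall v, exists e, src e = v) /\
  (* the order on r^{-1}(v) is the linear order induced by rank *)
  (forall e f, rng e = rng f -> rank e = rank f -> e = f).

Fixpoint fpath (u w : V) (p : seq E) : Prop :=
  match p with
  | [::] => u = w
  | e :: p' => src e = u /\ fpath (rng e) w p'
  end.

Definition connected (u w : V) : Prop := exists p, fpath u w p.

Definition is_max (e : E) : Prop := forall f, rng f = rng e -> rank f <= rank e.
Definition is_min (e : E) : Prop := forall f, rng f = rng e -> rank e <= rank f.

(* lexicographic order on finite paths with common range: compare at the
   highest level where they differ *)
Definition lexlt (p q : seq E) : Prop :=
  exists a b c e f, p = a ++ e :: c /\ q = b ++ f :: c /\
    size a = size b /\ rank e < rank f.

Definition succ_path (p q : seq E) : Prop :=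
  exists u u' w, fpath u w p /\ fpath u' w q /\ lvl u' = lvl u /\
    lexlt p q /\
    ~ (exists u'' r, fpath u'' w r /\ lvl u'' = lvl u /\ lexlt p r /\ lexlt r q).

Definition inf_path (x : nat -> E) : Prop :=
  lvl (src (x 0)) = 0 /\ forall j, rng (x j) = src (x j.+1).

Variable k : nat.
(* partition data: part v = Some i  means v \in V^n_i, None means v \in V^n_o
   (meaningful for levels n >= 1) *)
Variable part : V -> option 'I_k.

Definition inVi (v : V) (i : 'I_k) : Prop := 1 <= lvl v /\ part v = Some i.
Definition inVo (v : V) : Prop := 1 <= lvl v /\ part v = None.

Definition k_simple : Prop :=
  (forall e i, 2 <= lvl (rng e) -> inVi (rng e) i -> inVi (src e) i) /\
  (forall (i : 'I_k) n, 1 <= n -> exists m, n < m /\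
     forall v w, lvl v = n -> inVi v i -> lvl w = m -> inVi w i ->
       connected v w).

(* m_+(v) = i : the maximal path from v0 to v passes at level 1 through V^1_i *)
Definition mplus (v : V) (i : 'I_k) : Prop :=
  exists u e p, lvl u = 0 /\ fpath u v (e :: p) /\
    (forall f, List.In f (e :: p) -> is_max f) /\ inVi (rng e) i.
Definition mminus (v : V) (i : 'I_k) : Prop :=
  exists u e p, lvl u = 0 /\ fpath u v (e :: p) /\
    (forall f, List.In f (e :: p) -> is_min f) /\ inVi (rng e) i.

Definition k_simple_ordered (L : nat) : Prop :=
  k_simple /\
  (exists zmax zmin : 'I_k -> nat -> E,
     (forall i, inf_path (zmax i) /\ inf_path (zmin i)) /\
     (forall i j, 1 <= j -> inVi (src (zmax i j)) i /\ inVi (src (zmin i j)) i) /\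
     (forall x, inf_path x ->
        ((forall j, is_max (x j)) <-> exists i, forall j, x j = zmax i j)) /\
     (forall x, inf_path x ->
        ((forall j, is_min (x j)) <-> exists i, forall j, x j = zmin i j))) /\
  (forall v, L <= lvl v -> inVo v ->
     (exists i, mplus v i) /\ (exists i, mminus v i)) /\
  (forall v, L <= lvl v -> inVo v ->
     forall e p w f q, fpath v w (e :: p) ->
       ~ (forall g, List.In g (e :: p) -> is_max g) ->
       succ_path (e :: p) (f :: q) ->
       exists i, mminus (src f) i /\ mplus v i) /\
  (forall v e f i, L <= lvl v -> 3 <= lvl v -> inVo v ->
     rng e = v -> ~ is_max e -> inVi (src e) i ->
     succ_path [:: e] [:: f] -> mminus (src f) i).

Definition non_elementary : Prop :=
  forall n, exists m, n < m /\
    forall v w, lvl v = n -> inVo v -> lvl w = m -> inVo w ->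
      (~ connected v w) \/
      (exists p q, fpath v w p /\ fpath v w q /\ p <> q).

(* transition graph L_n: an edge labelled v from Y_a to Y_b *)
Definition tedge (n : nat) (v : V) (a b : 'I_k) : Prop :=
  lvl v = n /\ inVo v /\ mminus v a /\ mplus v b.

(* directed walk in L_n from Y_a to Y_b, edges listed with their targets *)
Fixpoint twalk (n : nat) (a : 'I_k) (w : seq (V * 'I_k)) (b : 'I_k) : Prop :=
  match w with
  | [::] => a = b
  | (v, c) :: w' => tedge n v a c /\ twalk n c w' b
  end.

End Defs.

(* Main.v *)
Require Import Defs.
From mathcomp Require Import all_boot zify.
From Stdlib Require Import Classical.
From Stdlib Require List.
Set Implicit Arguments. Unset Strict Implicit. Unset Printing Implicit Defensive.

Lemma cat_inj (T : Type) (a b x y : seq T) :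
  size a = size b -> a ++ x = b ++ y -> a = b /\ x = y.
Proof.
elim: a b => [|h a IH] [|h' b] //= [Hs] [-> Hc].
by have [-> ->] := IH _ Hs Hc.
Qed.

Lemma cat_split (T : Type) (l1 s1 l2 s2 : seq T) :
  l1 ++ s1 = l2 ++ s2 -> size l2 <= size l1 ->
  exists y, l1 = l2 ++ y /\ s2 = y ++ s1.
Proof.
elim: l2 l1 => [|h l2 IH] l1 /=.
  by move=> <- _; exists l1.
case: l1 => [|h' l1] //= [-> Hc] Hs.
have [y [-> ->]] := IH _ Hc Hs. by exists y.
Qed.

Lemma cat_app (T : Type) (s t : seq T) : s ++ t = List.app s t.
Proof. by elim: s => //= h s ->. Qed.

Lemma in_cat_or (T : Type) (x : T) s t : List.In x (s ++ t) <-> List.In x s \/ List.In x t.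
Proof. rewrite cat_app; exact: List.in_app_iff. Qed.

Lemma split_in (T : Type) (x : T) s : List.In x s -> exists s1 s2, s = s1 ++ x :: s2.
Proof. move=> H; have [s1 [s2 ->]] := List.in_split x s H; exists s1, s2; by rewrite cat_app. Qed.


Lemma fpath_cat (B : obd) (u w : V B) a b :
  Defs.fpath u w (a ++ b) <-> exists x, Defs.fpath u x a /\ Defs.fpath x w b.
Proof.
elim: a u => [|e a IH] u /=.
  split; [by move=> H; exists u | by move=> [x [-> H]]].
split.
  move=> [Hs /IH [x [H1 H2]]]; exists x; by split.
move=> [x [[Hs H1] H2]]; split => //; apply/IH; by exists x.
Qed.

Lemma fpath_end (B : obd) (x y z : V B) c : Defs.fpath x z c -> Defs.fpath y z c -> x = y.
Proof. case: c => [|e c] /=; [by move=> -> -> | by move=> [<- _] [<- _]]. Qed.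

Lemma fpath_lvl (B : obd) (u w : V B) p : is_obd B -> Defs.fpath u w p -> lvl w = lvl u + size p.
Proof.
move=> [Hl _]; elim: p u => [|e p IH] u /=; first by move=> ->; rewrite addn0.
move=> [<- /IH ->]; rewrite Hl; lia.
Qed.

Lemma fpath_in_lvl (B : obd) (u w : V B) p g : is_obd B -> Defs.fpath u w p -> List.In g p ->
  lvl (src g) < lvl w.
Proof.
move=> HB; elim: p u => [|e p IH] u //= [Hs Hp] [<-|Hg].
  have := fpath_lvl HB Hp; have [Hl _] := HB; move: (Hl e); lia.
exact: IH Hp Hg.
Qed.

Lemma lexlt_size (B : obd) (p q : seq (E B)) : lexlt p q -> size p = size q.
Proof. move=> [a [b [c [e [f [-> [-> [Hs _]]]]]]]]; rewrite !size_cat /= Hs; done. Qed.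

Lemma lexlt_irr (B : obd) (p : seq (E B)) : ~ lexlt p p.
Proof.
move=> [a [b [c [e [f [-> [Heq [Hs Hr]]]]]]]].
have [_ Hc] := cat_inj Hs Heq; case: Hc => He; subst; lia.
Qed.

Lemma lexlt_app (B : obd) (s t X Y Z : seq (E B)) :
  lexlt s t -> size X = size Y -> lexlt (X ++ s ++ Z) (Y ++ t ++ Z).
Proof.
move=> [a [b [c [e [f [-> [-> [Hs Hr]]]]]]]] HXY.
exists (X ++ a), (Y ++ b), (c ++ Z), e, f; rewrite !catA -!cat_cons !catA.
by rewrite !size_cat HXY Hs.
Qed.

Lemma lexlt_trans (B : obd) (p r q : seq (E B)) : lexlt p r -> lexlt r q -> lexlt p q.
Proof.
move=> [a [b [c [e [f [-> [Hr [Hs Hef]]]]]]]] [a' [b' [c' [e' [f' [Hr' [-> [Hs' Hef']]]]]]]].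
rewrite Hr' in Hr.
have Hsz := congr1 size Hr; rewrite !size_cat /= in Hsz.
case: (ltngtP (size c) (size c')) => Hc.
- have [|y [Hb Hy]] := cat_split (esym Hr); first lia.
  case: y Hb Hy => [|h y'] Hb Hy.
    by rewrite cats0 in Hb; subst; lia.
  case: Hy => Hh Hy; subst.
  exists a, (b' ++ f' :: y'), c, e, f; rewrite -catA /=; split => //; split => //.
  move: Hs Hs'; rewrite !size_cat /=; lia.
- have [|y [Hb Hy]] := cat_split Hr; first lia.
  case: y Hb Hy => [|h y'] Hb Hy.
    by rewrite cats0 in Hb; subst; lia.
  case: Hy => Hh Hy; subst.
  exists (a ++ e :: y'), b', c', e', f'; rewrite -catA /=; split => //; split => //.
  split; last lia. move: Hs Hs'; rewrite !size_cat /=; lia.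
- have [|Hab Hc2] := cat_inj _ Hr; first lia.
  case: Hc2 => He Hc3; subst.
  exists a, b', c, e, f'; split => //; split => //; split; lia.
Qed.

Lemma In_rcons (T : Type) (x g : T) s : List.In x (rcons s g) <-> List.In x s \/ x = g.
Proof. rewrite -cats1 in_cat_or /=; intuition. Qed.

Lemma fpath_rcons (B : obd) (u v : V B) l g :
  Defs.fpath u v (rcons l g) <-> Defs.fpath u (src g) l /\ rng g = v.
Proof.
rewrite -cats1 fpath_cat /=; split.
  by move=> [x [H1 [Hx H2]]]; subst x.
by move=> [H1 H2]; exists (src g).
Qed.

Lemma decomp (T : Type) (p q : seq T) : size p = size q -> p <> q ->
  exists a b e f c, p = a ++ e :: c /\ q = b ++ f :: c /\ size a = size b /\ e <> f.
Proof.
elim/last_ind: p q => [|p x IH] q.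
  by case: q.
case/lastP: q => [|q y]; first by rewrite size_rcons.
rewrite !size_rcons; case=> Hs Hne.
case: (classic (x = y)) => Hxy.
  subst y. have Hpq : p <> q by move=> E; apply: Hne; rewrite E.
  have [a [b [e [f [c [-> [-> [Hab Hef]]]]]]]] := IH q Hs Hpq.
  exists a, b, e, f, (rcons c x); rewrite -!cats1 -!catA /=; done.
exists p, q, x, y, [::]; rewrite -!cats1; done.
Qed.

Lemma obd_inj (B : obd) (e f : E B) : is_obd B -> rng e = rng f -> rank e = rank f -> e = f.
Proof. move=> [_ [_ [_ [_ [_ [_ [_ H]]]]]]]; exact: H. Qed.

Lemma obd_lvl (B : obd) (e : E B) : is_obd B -> lvl (rng e) = (lvl (src e)).+1.
Proof. move=> [H _]; exact: H. Qed.

Lemma lex_total (B : obd) (u u' z : V B) p q : is_obd B ->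
  Defs.fpath u z p -> Defs.fpath u' z q -> size p = size q -> p <> q -> lexlt p q \/ lexlt q p.
Proof.
move=> HB Hp Hq Hs Hne.
have [a [b [e [f [c [Ep [Eq [Hab Hef]]]]]]]] := decomp Hs Hne.
subst.
move: Hp => /fpath_cat [x [_ /= [_ Hc1]]].
move: Hq => /fpath_cat [y [_ /= [_ Hc2]]].
have Hr := fpath_end Hc1 Hc2.
case: (ltngtP (rank e) (rank f)) => Hr2.
- by left; exists a, b, c, e, f.
- by right; exists b, a, c, f, e.
- by case: Hef; apply: obd_inj.
Qed.

Lemma ext_suffix (B : obd) (P : E B -> Prop)
  (HP : forall g g', P g -> P g' -> rng g = rng g' -> g = g') (u u' v : V B) l l' :
  Defs.fpath u v l -> Defs.fpath u' v l' -> (forall g, List.In g l -> P g) ->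
  (forall g, List.In g l' -> P g) -> size l <= size l' -> exists l0, l' = l0 ++ l.
Proof.
elim/last_ind: l v l' => [|l g IH] v l'.
  by move=> _ _ _ _ _; exists l'; rewrite cats0.
move=> /fpath_rcons [H1 Hg].
case/lastP: l' => [|l' g']; first by rewrite size_rcons.
move=> /fpath_rcons [H1' Hg'] HPl HPl'; rewrite !size_rcons ltnS => Hs.
have Egg : g = g'.
  apply: HP; [apply: HPl | apply: HPl' | by rewrite Hg Hg'];
  by apply/In_rcons; right.
subst g'.
have [||l0 ->] := IH _ l' H1 H1' _ _ Hs.
- by move=> x Hx; apply: HPl; apply/In_rcons; left.
- by move=> x Hx; apply: HPl'; apply/In_rcons; left.
by exists l0; rewrite rcons_cat.
Qed.

Lemma max_uniq (B : obd) : is_obd B ->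
  forall g g' : E B, is_max g -> is_max g' -> rng g = rng g' -> g = g'.
Proof.
move=> HB g g' H1 H2 Hr; apply: obd_inj => //.
have := H1 g' (esym Hr); have := H2 g Hr; lia.
Qed.

Lemma min_uniq (B : obd) : is_obd B ->
  forall g g' : E B, is_min g -> is_min g' -> rng g = rng g' -> g = g'.
Proof.
move=> HB g g' H1 H2 Hr; apply: obd_inj => //.
have := H1 g' (esym Hr); have := H2 g Hr; lia.
Qed.

Definition Mplus (B : obd) k (part : V B -> option 'I_k) (y : V B) (a : 'I_k) :=
  (inVo part y /\ mplus part y a) \/ inVi part y a.
Definition Mminus (B : obd) k (part : V B -> option 'I_k) (y : V B) (a : 'I_k) :=
  (inVo part y /\ mminus part y a) \/ inVi part y a.

Lemma inVi_fun (B : obd) k (part : V B -> option 'I_k) v i j :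
  inVi part v i -> inVi part v j -> i = j.
Proof. by move=> [_ H1] [_ H2]; rewrite H1 in H2; case: H2. Qed.

Lemma inVi_Vo (B : obd) k (part : V B -> option 'I_k) v i :
  inVi part v i -> inVo part v -> False.
Proof. by move=> [_ H1] [_ H2]; rewrite H1 in H2. Qed.

Lemma lvl_part (B : obd) k (part : V B -> option 'I_k) v :
  1 <= lvl v -> inVo part v \/ exists i, inVi part v i.
Proof.
move=> H; case E: (part v) => [i|]; first by right; exists i.
by left.
Qed.

Lemma bclose (B : obd) k (part : V B -> option 'I_k) : is_obd B -> k_simple part ->
  forall l (x y : V B) j, Defs.fpath x y l -> 1 <= lvl x -> inVi part y j -> inVi part x j.
Proof.
move=> HB [Hk _]; elim=> [|e l IH] x y j /=; first by move=> ->.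
move=> [Hs Hp] Hx Hy.
have Hl := obd_lvl e HB.
have H1 : inVi part (rng e) j by apply: IH Hp _ Hy; lia.
subst x; apply: Hk => //; lia.
Qed.

Lemma vo_fwd (B : obd) k (part : V B -> option 'I_k) : is_obd B -> k_simple part ->
  forall (v : V B) e, inVo part v -> src e = v -> inVo part (rng e).
Proof.
move=> HB HK v e Hv Hs.
have Hl := obd_lvl e HB.
have H1 : 1 <= lvl (rng e) by lia.
have [//|[i Hi]] := lvl_part part H1.
exfalso; apply: (inVi_Vo (v:=v) (i:=i)) => //.
rewrite -Hs; apply: (bclose HB HK (l:=[:: e]) (y:=rng e)) => //=.
  by rewrite Hs; case: Hv.
done.
Qed.

Lemma fwd_path (B : obd) k (part : V B -> option 'I_k) : is_obd B -> k_simple part ->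
  forall d (v : V B), inVo part v ->
  exists z l, Defs.fpath v z l /\ lvl z = lvl v + d /\ inVo part z.
Proof.
move=> HB HK; elim=> [|d IH] v Hv.
  by exists v, [::]; rewrite addn0.
have [_ [_ [_ [_ [_ [_ [Hout _]]]]]]] := HB.
have [e He] := Hout v.
have [z [l [Hp [Hz Hzo]]]] := IH (rng e) (vo_fwd HB HK Hv He).
exists z, (e :: l); split => //; split => //.
rewrite Hz (obd_lvl e HB) He; lia.
Qed.

Lemma back_path (B : obd) : is_obd B -> forall n d (v : V B), lvl v = n + d ->
  exists u l, lvl u = n /\ Defs.fpath u v l.
Proof.
move=> HB n; elim=> [|d IH] v Hv.
  by exists v, [::]; rewrite addn0 in Hv.
have [_ [_ [_ [_ [_ [Hin _]]]]]] := HB.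
have [|e He] := Hin v; first lia.
have Hl := obd_lvl e HB; rewrite He in Hl.
have H1 : lvl (src e) = n + d by lia.
have [u [l [Hu Hp]]] := IH (src e) H1.
exists u, (rcons l e); split => //; apply/fpath_rcons; by split.
Qed.

Lemma LP (B : obd) k (part : V B -> option 'I_k) : is_obd B -> k_simple part ->
  forall (y u0 : V B) a e0 Q, Mplus part y a -> lvl u0 = 0 ->
  Defs.fpath u0 y (e0 :: Q) -> (forall g, List.In g (e0 :: Q) -> is_max g) ->
  inVi part (rng e0) a.
Proof.
move=> HB HK y u0 a e0 Q [[Hyo [u1 [e1 [Q1 [Hu1 [Hp1 [Hm1 Hi1]]]]]]] | Hya] Hu0 Hp Hm.
  have Hse : size (e0 :: Q) = size (e1 :: Q1).
    have := fpath_lvl HB Hp; have := fpath_lvl HB Hp1; lia.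
  have Hs : size (e0 :: Q) <= size (e1 :: Q1) by rewrite Hse.
  have [l0 Hl0] := ext_suffix (max_uniq HB) Hp Hp1 Hm Hm1 Hs.
  have Hs' := congr1 size Hl0; rewrite size_cat in Hs'.
  case: l0 Hl0 Hs' => [|h l0] /= Hl0' Hs''; last by move: Hse => /=; lia.
  by case: Hl0' => He _; rewrite -He.
move: Hp => /= [Hs Hp].
apply: (bclose HB HK Hp) => //.
rewrite (obd_lvl e0 HB) Hs Hu0 //.
Qed.

Lemma LM (B : obd) k (part : V B -> option 'I_k) : is_obd B -> k_simple part ->
  forall (y u0 : V B) a e0 Q, Mminus part y a -> lvl u0 = 0 ->
  Defs.fpath u0 y (e0 :: Q) -> (forall g, List.In g (e0 :: Q) -> is_min g) ->
  inVi part (rng e0) a.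
Proof.
move=> HB HK y u0 a e0 Q [[Hyo [u1 [e1 [Q1 [Hu1 [Hp1 [Hm1 Hi1]]]]]]] | Hya] Hu0 Hp Hm.
  have Hse : size (e0 :: Q) = size (e1 :: Q1).
    have := fpath_lvl HB Hp; have := fpath_lvl HB Hp1; lia.
  have Hs : size (e0 :: Q) <= size (e1 :: Q1) by rewrite Hse.
  have [l0 Hl0] := ext_suffix (min_uniq HB) Hp Hp1 Hm Hm1 Hs.
  have Hs' := congr1 size Hl0; rewrite size_cat in Hs'.
  case: l0 Hl0 Hs' => [|h l0] /= Hl0' Hs''; last by move: Hse => /=; lia.
  by case: Hl0' => He _; rewrite -He.
move: Hp => /= [Hs Hp].
apply: (bclose HB HK Hp) => //.
rewrite (obd_lvl e0 HB) Hs Hu0 //.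
Qed.

Lemma HPlus (B : obd) k (part : V B -> option 'I_k) : is_obd B -> k_simple part ->
  forall (u x : V B) A a i0, 1 <= lvl u -> Defs.fpath u x A ->
  (forall g, List.In g A -> is_max g) -> mplus part x i0 -> Mplus part u a -> a = i0.
Proof.
move=> HB HK u x A a i0 Hu HA Hm [u1 [e1 [Q1 [Hu1 [Hp1 [Hm1 Hi1]]]]]] Ha.
have Hl1 := fpath_lvl HB HA; have Hl2 := fpath_lvl HB Hp1; simpl in Hl2.
have Hs : size A <= size (e1 :: Q1) by rewrite /=; lia.
have [l0 Hl0] := ext_suffix (max_uniq HB) HA Hp1 Hm Hm1 Hs.
have Hs' := congr1 size Hl0; rewrite size_cat in Hs'.
case: l0 Hl0 Hs' => [|h l0] /= Hl0 Hs'; first lia.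
case: Hl0 => He1 HQ1; subst e1 Q1.
move: (Hp1); rewrite -cat_cons => /fpath_cat [x2 [H1 H2]].
have E2 := fpath_end H2 HA; subst x2.
have Hm0 : forall g, List.In g (h :: l0) -> is_max g.
  move=> g Hg; apply: Hm1; rewrite -cat_cons; apply/in_cat_or; by left.
have Hi := LP HB HK Ha Hu1 H1 Hm0.
exact: inVi_fun Hi Hi1.
Qed.

Lemma HMinus (B : obd) k (part : V B -> option 'I_k) : is_obd B -> k_simple part ->
  forall (u x : V B) A a i0, 1 <= lvl u -> Defs.fpath u x A ->
  (forall g, List.In g A -> is_min g) -> mminus part x i0 -> Mminus part u a -> a = i0.
Proof.
move=> HB HK u x A a i0 Hu HA Hm [u1 [e1 [Q1 [Hu1 [Hp1 [Hm1 Hi1]]]]]] Ha.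
have Hl1 := fpath_lvl HB HA; have Hl2 := fpath_lvl HB Hp1; simpl in Hl2.
have Hs : size A <= size (e1 :: Q1) by rewrite /=; lia.
have [l0 Hl0] := ext_suffix (min_uniq HB) HA Hp1 Hm Hm1 Hs.
have Hs' := congr1 size Hl0; rewrite size_cat in Hs'.
case: l0 Hl0 Hs' => [|h l0] /= Hl0 Hs'; first lia.
case: Hl0 => He1 HQ1; subst e1 Q1.
move: (Hp1); rewrite -cat_cons => /fpath_cat [x2 [H1 H2]].
have E2 := fpath_end H2 HA; subst x2.
have Hm0 : forall g, List.In g (h :: l0) -> is_min g.
  move=> g Hg; apply: Hm1; rewrite -cat_cons; apply/in_cat_or; by left.
have Hi := LM HB HK Ha Hu1 H1 Hm0.
exact: inVi_fun Hi Hi1.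
Qed.

Lemma not_max_ex (B : obd) (g : E B) : ~ is_max g -> exists g', rng g' = rng g /\ rank g < rank g'.
Proof.
move=> Hng; apply: NNPP => H; apply: Hng => f Hf; apply: NNPP => Hle; apply: H.
exists f; split => //; lia.
Qed.

Lemma not_min_ex (B : obd) (g : E B) : ~ is_min g -> exists g', rng g' = rng g /\ rank g' < rank g.
Proof.
move=> Hng; apply: NNPP => H; apply: Hng => f Hf; apply: NNPP => Hle; apply: H.
exists f; split => //; lia.
Qed.

Lemma base (B : obd) k (part : V B -> option 'I_k) L n (z : V B) :
  is_obd B -> k_simple_ordered part L -> 2 <= n -> L <= n ->
  forall u u' p q a c, lvl u = n -> lvl u' = n -> Defs.fpath u z p -> Defs.fpath u' z q ->
  lexlt p q ->
  (~ exists r u'', lvl u'' = n /\ Defs.fpath u'' z r /\ lexlt p r /\ lexlt r q) ->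
  Mplus part u a -> Mminus part u' c -> a = c.
Proof.
move=> HB [HK [_ [_ [H3a H3b]]]] Hn HL u u' p q a c Hu Hu' Hp Hq
  [A [Bq [C [e [f [Ep [Eq [HAB Hef]]]]]]]] NB Ha Hc.
subst p q.
move: (Hp) => /fpath_cat [x [HA /= [Hex HC]]].
move: (Hq) => /fpath_cat [x' [HBq /= [Hfx HC']]].
have Hy := fpath_end HC' HC.
have HlA := fpath_lvl HB HA; have HlB := fpath_lvl HB HBq.
have Hle := obd_lvl e HB; have Hlf := obd_lvl f HB.
have Hen : ~ is_max e.
  move=> H; have := H f Hy; lia.
have Amax : forall g, List.In g A -> is_max g.
  move=> g Hg; apply: NNPP => Hng.
  have [g' [Hr' Hlt]] := not_max_ex Hng.
  have [A1 [A2 EA]] := split_in Hg; subst A.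
  move: (HA) => /fpath_cat [y1 [HA1 /= [Hg1 HA2]]].
  have Hl1 := fpath_lvl HB HA1; rewrite -Hg1 in Hl1.
  have Hg' : lvl (src g') = n + size A1.
    have := obd_lvl g HB; have := obd_lvl g' HB; rewrite Hr'; lia.
  have [u'' [D [Hu'' HD]]] := back_path HB Hg'.
  have HlD := fpath_lvl HB HD.
  apply: NB; exists (D ++ g' :: A2 ++ e :: C), u''; split => //; split.
    apply/fpath_cat; exists (src g'); split => //=; split => //.
    rewrite Hr'; apply/fpath_cat; exists x; split => //=.
  split.
    exists A1, D, (A2 ++ e :: C), g, g'; rewrite -catA /=; split => //; split => //; split => //; lia.
  exists (D ++ g' :: A2), Bq, C, e, f; rewrite -catA /=; split => //; split => //; split => //.
  move: HAB; rewrite !size_cat /=; lia.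
have Bmin : forall g, List.In g Bq -> is_min g.
  move=> g Hg; apply: NNPP => Hng.
  have [g' [Hr' Hlt]] := not_min_ex Hng.
  have [B1 [B2 EB]] := split_in Hg; subst Bq.
  move: (HBq) => /fpath_cat [y1 [HB1 /= [Hg1 HB2]]].
  have Hl1 := fpath_lvl HB HB1; rewrite -Hg1 in Hl1.
  have Hg' : lvl (src g') = n + size B1.
    have := obd_lvl g HB; have := obd_lvl g' HB; rewrite Hr'; lia.
  have [u'' [D [Hu'' HD]]] := back_path HB Hg'.
  have HlD := fpath_lvl HB HD.
  apply: NB; exists (D ++ g' :: B2 ++ f :: C), u''; split => //; split.
    apply/fpath_cat; exists (src g'); split => //=; split => //.
    rewrite Hr'; apply/fpath_cat; exists x'; split => //=.
  split.
    exists A, (D ++ g' :: B2), C, e, f; rewrite -catA /=; split => //; split => //; split => //.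
    move: HAB; rewrite !size_cat /=; lia.
  exists D, B1, (B2 ++ f :: C), g', g; rewrite -catA /=; split => //; split => //; split => //; lia.
have Hx1 : 1 <= lvl x by lia.
case: (lvl_part part Hx1) => [Hxo | [j Hxj]].
-
  have [||||i0 [Hmm Hmp]] := H3a x _ Hxo e C z f C _ _.
  + lia.
  + by rewrite /= Hex.
  + by move=> H; apply: Hen; apply: H; left.
  + exists x, x', z; split; first by rewrite /= Hex.
    split; first by rewrite /= Hfx.
    split; first by rewrite -Hex -Hfx; move: Hle Hlf; rewrite Hy; lia.
    split; first by exists [::], [::], C, e, f.
    move=> [u3 [r [Hr1 [Hr2 [Hr3 Hr4]]]]].
    have Hu3 : lvl u3 = n + size A by lia.
    have [u4 [D [Hu4 HD]]] := back_path HB Hu3.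
    have HlD := fpath_lvl HB HD.
    apply: NB; exists (D ++ r), u4; split => //; split.
      by apply/fpath_cat; exists u3.
    split.
      have HAD : size A = size D by lia.
      have := @lexlt_app _ _ _ _ _ [::] Hr3 HAD; rewrite !cats0; apply.
    have HDB : size D = size Bq by lia.
    have := @lexlt_app _ _ _ _ _ [::] Hr4 HDB; rewrite !cats0; apply.
  + have Hu1 : 1 <= lvl u by lia.
    have -> := HPlus HB HK Hu1 HA Amax Hmp Ha.
    rewrite -Hfx in HBq.
    have Hu1' : 1 <= lvl u' by lia.
    by have -> := HMinus HB HK Hu1' HBq Bmin Hmm Hc.
-
  have Huj : inVi part u j by apply: (bclose HB HK HA) => //; lia.
  have Haj : a = j.
    case: Ha => [[Huo _] | Hua]; first by case: (inVi_Vo Huj Huo).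
    exact: inVi_fun Hua Huj.
  subst a.
  have Hy1 : 1 <= lvl (rng e) by lia.
  have Hlx : lvl (rng e) = (lvl x).+1 by rewrite Hle Hex.
  have Hlx' : lvl (rng f) = (lvl x').+1 by rewrite Hlf Hfx.
  case: (lvl_part part Hy1) => [Hyo | [j' Hyj]].
  + have Hmm : mminus part (src f) j.
      apply: (H3b (rng e) e f j) => //; try lia; first by rewrite Hex.
      exists x, x', (rng e); split; first by rewrite /= Hex.
      split; first by rewrite /= Hfx.
      split; first by rewrite -Hex -Hfx; move: Hle Hlf; rewrite Hy; lia.
      split; first by exists [::], [::], [::], e, f.
      move=> [u3 [r [Hr1 [Hr2 [Hr3 Hr4]]]]].
      have Hu3 : lvl u3 = n + size A by lia.
    have [u4 [D [Hu4 HD]]] := back_path HB Hu3.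
      have HlD := fpath_lvl HB HD.
      apply: NB; exists (D ++ r ++ C), u4; split => //; split.
        apply/fpath_cat; exists u3; split => //; apply/fpath_cat; by exists (rng e).
      split.
        have HAD : size A = size D by lia.
        exact: @lexlt_app _ _ _ _ _ C Hr3 HAD.
      have HDB : size D = size Bq by lia.
      exact: @lexlt_app _ _ _ _ _ C Hr4 HDB.
    rewrite -Hfx in HBq.
    have Hu1' : 1 <= lvl u' by lia.
    by have -> := HMinus HB HK Hu1' HBq Bmin Hmm Hc.
  + have [Hk _] := HK.
    have Hj' : inVi part x j' by rewrite -Hex; apply: Hk => //; lia.
    have Ejj := inVi_fun Hj' Hxj; subst j'.
    have Hfj : inVi part x' j by rewrite -Hfx; apply: Hk; [lia | by rewrite Hy].
    have Hu'j : inVi part u' j by apply: (bclose HB HK HBq) => //; lia.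
    case: Hc => [[Huo _] | Huc]; first by case: (inVi_Vo Hu'j Huo).
    exact: inVi_fun Hu'j Huc.
Qed.

Lemma twalk_cat (B : obd) k (part : V B -> option 'I_k) n :
  forall w1 w2 a b c, twalk part n a w1 b -> twalk part n b w2 c -> twalk part n a (w1 ++ w2) c.
Proof.
elim=> [|[v d] w1 IH] w2 a b c /=; first by move=> ->.
move=> [He Hw] Hw2; split => //; exact: IH Hw Hw2.
Qed.

Lemma walk_aux (B : obd) k (part : V B -> option 'I_k) L n (z : V B) :
  is_obd B -> k_simple_ordered part L -> 2 <= n -> L <= n ->
  forall N T p q u u' a c, size T < N -> lvl u = n -> lvl u' = n ->
  Defs.fpath u z p -> Defs.fpath u' z q -> lexlt p q ->
  (forall r u'', lvl u'' = n -> Defs.fpath u'' z r -> lexlt p r -> lexlt r q -> List.In r T) ->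
  Mplus part u a -> Mminus part u' c -> exists w, twalk part n a w c.
Proof.
move=> HB HKO Hn HL; elim=> [|N IH] T p q u u' a c HT Hu Hu' Hp Hq Hpq HinT Ha Hc //.
case: (classic (exists r u'', lvl u'' = n /\ Defs.fpath u'' z r /\ lexlt p r /\ lexlt r q)) => Hex.
- move: Hex => [r [ur [Hur [Hr [Hpr Hrq]]]]].
  have [T1 [T2 ET]] := split_in (HinT r ur Hur Hr Hpr Hrq); subst T.
  have HT' : size (T1 ++ T2) < N by move: HT; rewrite !size_cat /=; lia.
  have Hsub : forall r', lexlt p r' -> lexlt r' q -> r' <> r -> forall u'', lvl u'' = n ->
      Defs.fpath u'' z r' -> List.In r' (T1 ++ T2).
    move=> r' H1 H2 Hne u'' Hu'' Hr'.
    have := HinT r' u'' Hu'' Hr' H1 H2.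
    rewrite !in_cat_or /=; intuition; by case: Hne.
  have HA : forall c1, Mminus part ur c1 -> exists w, twalk part n a w c1.
    move=> c1 Hc1; apply: (IH (T1 ++ T2) p r u ur) => //.
    move=> r' u'' Hu'' Hr' H1 H2; apply: (Hsub r' _ _ _ u'' Hu'' Hr') => //.
    - exact: lexlt_trans H2 Hrq.
    - by move=> E; subst r'; apply: (lexlt_irr H2).
  have HC : forall c2, Mplus part ur c2 -> exists w, twalk part n c2 w c.
    move=> c2 Hc2; apply: (IH (T1 ++ T2) r q ur u') => //.
    move=> r' u'' Hu'' Hr' H1 H2; apply: (Hsub r' _ _ _ u'' Hu'' Hr') => //.
    - exact: lexlt_trans Hpr H1.
    - by move=> E; subst r'; apply: (lexlt_irr H1).
  have Hur1 : 1 <= lvl ur by lia.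
  case: (lvl_part part Hur1) => [Huro | [j Hj]].
  + have [_ [_ [Hexm _]]] := HKO.
    have HLur : L <= lvl ur by rewrite Hur.
    have [[c2 Hc2] [c1 Hc1]] := Hexm ur HLur Huro.
    have [w1 Hw1] := HA c1 (or_introl (conj Huro Hc1)).
    have [w2 Hw2] := HC c2 (or_introl (conj Huro Hc2)).
    exists (w1 ++ (ur, c2) :: w2); apply: (twalk_cat Hw1) => /=; split => //.
  + have [w1 Hw1] := HA j (or_intror Hj).
    have [w2 Hw2] := HC j (or_intror Hj).
    exists (w1 ++ w2); exact: twalk_cat Hw1 Hw2.
- exists [::] => /=.
  exact: (base HB HKO Hn HL Hu Hu' Hp Hq Hpq Hex Ha Hc).
Qed.

Lemma edges_below (B : obd) : is_obd B -> forall m, exists S : seq (E B),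
  forall e, lvl (src e) < m -> List.In e S.
Proof.
move=> HB; have [_ [_ [_ [_ [HE _]]]]] := HB.
elim=> [|m [S HS]]; first by exists [::].
have [Sm HSm] := HE m.
exists (S ++ Sm) => e He; apply/in_cat_or.
case: (ltngtP (lvl (src e)) m) => H; [left; exact: HS | lia | right; exact: HSm].
Qed.

Fixpoint allseqs (T : Type) (S : seq T) (l : nat) : seq (seq T) :=
  match l with
  | 0 => [:: [::]]
  | l'.+1 => List.flat_map (fun e => map (cons e) (allseqs S l')) S
  end.

Lemma allseqs_in (T : Type) (S : seq T) r : (forall g, List.In g r -> List.In g S) ->
  List.In r (allseqs S (size r)).
Proof.
elim: r => [|g r IH] H /=; first by left.
apply/List.in_flat_map; exists g; split; first by apply: H; left.
apply: List.in_map; apply: IH => x Hx; apply: H; by right.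
Qed.

Lemma paths_fin (B : obd) : is_obd B -> forall n (z : V B), exists T,
  forall r u'', lvl u'' = n -> Defs.fpath u'' z r -> List.In r T.
Proof.
move=> HB n z; have [S HS] := edges_below HB (lvl z).
exists (allseqs S (lvl z - n)) => r u'' Hu Hr.
have := fpath_lvl HB Hr; rewrite Hu => Hl.
have -> : lvl z - n = size r by lia.
apply: allseqs_in => g Hg; apply: HS; exact: fpath_in_lvl HB Hr Hg.
Qed.

Theorem corollary7p4 (B : obd) (k : nat) (part : V B -> option 'I_k) (L : nat) :
  is_obd B -> 2 <= k ->
  k_simple_ordered part L -> non_elementary part ->
  forall n, maxn 2 L <= n ->
  forall (v1 : V B) (i b : 'I_k), tedge part n v1 i b ->
  exists (c : 'I_k) (w : seq (V B * 'I_k)), twalk part n i ((v1, c) :: w) i.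
Proof.
move=> HB _ HKO HNE n Hn v1 i b Ht.
have Hn2 : 2 <= n by move: Hn; rewrite geq_max => /andP [].
have HLn : L <= n by move: Hn; rewrite geq_max => /andP [].
move: (Ht) => [Hv1l [Hv1o [Hmm Hmp]]].
have HK : k_simple part by case: HKO.
have [m [Hnm Hm]] := HNE n.
have [z [l [Hl [Hz Hzo]]]] := fwd_path HB HK (m - n) Hv1o.
have Hzm : lvl z = m by rewrite Hz Hv1l; lia.
have [Hnc | [p [q [Hp [Hq Hpq]]]]] := Hm v1 z Hv1l Hv1o Hzm Hzo.
  by case: Hnc; exists l.
have Hs : size p = size q by have := fpath_lvl HB Hp; have := fpath_lvl HB Hq; lia.
have [T HT] := paths_fin HB n z.
have Ha : Mplus part v1 b by left.
have Hc : Mminus part v1 i by left.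
exists b.
have [Hlt | Hlt] := lex_total HB Hp Hq Hs Hpq.
- have [w Hw] := walk_aux HB HKO Hn2 HLn (ltnSn (size T)) Hv1l Hv1l Hp Hq Hlt
    (fun r u'' H1 H2 _ _ => HT r u'' H1 H2) Ha Hc.
  by exists w.
- have [w Hw] := walk_aux HB HKO Hn2 HLn (ltnSn (size T)) Hv1l Hv1l Hq Hp Hlt
    (fun r u'' H1 H2 _ _ => HT r u'' H1 H2) Ha Hc.
  by exists w.
Qed.
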